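(* Let $I$ be an instance of 3-SAT$^*$ with 1-in-3-clauses $C_0,\dots,C_{m-1}$, 2-in-3-clauses $C_m,\dots,C_{2m-1}$ and variables $x_0,\dots,x_{n-1}$, and let $\kappa:[n]\times[4]\to[2m]\times[3]$ be the bijection mapping $(j,t)$ to the (clause index, position in that clause) of the first ($t=0$) or second ($t=1$) positive occurrence of $x_j$, or of the first ($t=2$) or second ($t=3$) negative occurrence of $x_j$. Construct the restricted assignment instance $I'$ as follows. Machines: truth assignment machines $\mathtt{TMach}(j,q)$ for $j\in[n],q\in[2]$, and clause machines $\mathtt{CMach}(i,s)$ for $i\in[2m],s\in[3]$. Jobs: (i) for each $j\in[n]$ a truth assignment job $\mathtt{TJob}(j)$ of size $2$ eligible on $\{\mathtt{TMach}(j,0),\mathtt{TMach}(j,1)\}$; (ii) for each $i\in[2m]$ and $s\in[3]$ a clause job $\mathtt{CJob}(i,s)$ eligible on $\{\mathtt{CMach}(i,s'):s'\in[3]\}$, where $\mathtt{CJob}(i,0)$ has size $1$, $\mathtt{CJob}(i,2)$ has size $2$, and $\mathtt{CJob}(i,1)$ has size $2$ if $C_i$ is a 1-in-3-clause and size $1$ otherwise; (iii) for each $j\in[n]$, $t\in[4]$ a variable job $\mathtt{VJob}(j,t)$ of size $1$ eligible on $\{\mathtt{TMach}(j,\lfloor t/2\rfloor),\mathtt{CMach}(\kappa(j,t))\}$. Then there is a satisfying truth assignment for $I$ if and only if there is a schedule of makespan $2$ for $I'$.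
   Context: Notation: $[k]=\{0,\dots,k-1\}$. A 3-SAT$^*$ instance is a conjunction of clauses each with exactly 3 literals, each clause being either a 1-in-3-clause (satisfied iff exactly one of its literals is true) or a 2-in-3-clause (satisfied iff exactly two of its literals are true); there are equally many 1-in-3- and 2-in-3-clauses, and each literal ($x_j$ and $\neg x_j$ for every variable) occurs exactly twice. Restricted assignment: each job has a size and a set of eligible machines, a schedule assigns each job to an eligible machine, and the makespan is the maximum total size assigned to a machine. *)

(* Defs.v *)
From mathcomp Require Import all_boot.
Set Implicit Arguments. Unset Strict Implicit. Unset Printing Implicit Defensive.

(** * 3-SAT* instances
  Variables x_0..x_{n-1} are 'I_n; a literal is a pair (j, b) with b = true
  meaning x_j and b = false meaning (not x_j).  An instance with m 1-in-3 and
  m 2-in-3 clauses is a map cl : 'I_(2*m) -> 'I_3 -> literal; clause i is a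
  1-in-3-clause iff i < m. *)

Definition lit_val (n : nat) (a : 'I_n -> bool) (l : 'I_n * bool) : bool :=
  if l.2 then a l.1 else ~~ a l.1.

Definition sat (n m : nat) (cl : 'I_(2 * m) -> 'I_3 -> 'I_n * bool)
    (a : 'I_n -> bool) : Prop :=
  forall i : 'I_(2 * m),
    #|[set s : 'I_3 | lit_val a (cl i s)]| = (if i < m then 1 else 2).

Definition pos_lt (m : nat) (p q : 'I_(2 * m) * 'I_3) : bool :=
  (p.1 < q.1) || ((p.1 == q.1) && (p.2 < q.2)).

Definition load (J M : finType) (size : J -> nat) (sigma : J -> M) (x : M) : nat :=
  \sum_(j : J | sigma j == x) size j.

Definition makespan (J M : finType) (size : J -> nat) (sigma : J -> M) : nat :=
  \max_(x : M) load size sigma x.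

Definition valid_schedule (J M : finType) (elig : J -> {set M}) (sigma : J -> M) : Prop :=
  forall j, sigma j \in elig j.

Definition Mach (n m : nat) : finType := (('I_n * 'I_2) + ('I_(2 * m) * 'I_3))%type.
(* jobs: TJob(j) = inl j, CJob(i,s) = inr (inl (i,s)), VJob(j,t) = inr (inr (j,t)) *)
Definition Job (n m : nat) : finType :=
  ('I_n + (('I_(2 * m) * 'I_3) + ('I_n * 'I_4)))%type.

Definition TMach (n m : nat) (j : 'I_n) (q : 'I_2) : Mach n m := inl (j, q).
Definition CMach (n m : nat) (i : 'I_(2 * m)) (s : 'I_3) : Mach n m := inr (i, s).

Definition job_size (n m : nat) (jb : Job n m) : nat :=
  match jb with
  | inl _ => 2
  | inr (inl (i, s)) =>
      if val s == 0 then 1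
      else if val s == 1 then (if val i < m then 2 else 1)
      else 2
  | inr (inr _) => 1
  end.

Definition job_elig (n m : nat) (kappa : 'I_n * 'I_4 -> 'I_(2 * m) * 'I_3)
    (jb : Job n m) : {set Mach n m} :=
  match jb with
  | inl j => [set TMach m j (inord 0); TMach m j (inord 1)]
  | inr (inl (i, s)) => [set CMach n i s' | s' : 'I_3]
  | inr (inr (j, t)) =>
      [set TMach m j (inord (val t %/ 2)); CMach n (kappa (j, t)).1 (kappa (j, t)).2]
  end.

(* Main.v *)
Require Import Defs.
From mathcomp Require Import all_boot zify.
Set Implicit Arguments. Unset Strict Implicit.

Lemma sum_sub (I : finType) (P Q : pred I) (F : I -> nat) :
  (forall i, P i -> Q i) -> \sum_(i | P i) F i <= \sum_(i | Q i) F i.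
Proof.
move=> PQ; rewrite [X in _ <= X](bigID P) /=.
apply: leq_trans (leq_addr _ _); apply: eq_leq; apply: eq_bigl => i.
by case E: (P i); rewrite ?andbT ?andbF ?PQ.
Qed.

Lemma load_le1 (J M : finType) (size : J -> nat) (sigma : J -> M) x a :
  (forall jb, sigma jb == x -> jb = a) -> load size sigma x <= size a.
Proof.
move=> H; apply: leq_trans (@sum_sub _ _ (pred1 a) _ _) _.
  by move=> i /H ->; rewrite /= eqxx.
by rewrite big_pred1_eq.
Qed.

Lemma load_le2 (J M : finType) (size : J -> nat) (sigma : J -> M) x a b :
  (forall jb, sigma jb == x -> jb = a \/ jb = b) ->
  load size sigma x <= size a + size b.
Proof.
move=> H; apply: leq_trans (@sum_sub _ _ (fun jb => (jb == a) || (jb == b)) _ _) _.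
  by move=> i /H [->|->]; rewrite eqxx ?orbT.
rewrite (bigD1 a) /= ?eqxx // leq_add2l.
apply: leq_trans (@sum_sub _ _ (pred1 b) _ _) _.
  by move=> i /andP [] /orP [] /eqP -> //=; rewrite eqxx.
by rewrite big_pred1_eq.
Qed.

Lemma load_ge2 (J M : finType) (size : J -> nat) (sigma : J -> M) x a b :
  a != b -> sigma a = x -> sigma b = x -> size a + size b <= load size sigma x.
Proof.
move=> ab Ha Hb; rewrite /load (bigD1 a) /= ?Ha ?eqxx //.
rewrite leq_add2l (bigD1 b) /= ?Hb ?eqxx 1?eq_sym //.
exact: leq_addr.
Qed.

Lemma BF1 r s u : r < 3 -> s < 3 -> u < 3 ->
  ((s + r) %% 3 == u) = (s == (u + 2 * r) %% 3).
Proof. by move: r s u => [|[|[|r]]] // [|[|[|s]]] // [|[|[|u]]]. Qed.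
Lemma BF2 r u : r < 3 -> u < 3 -> u != r -> (u + 2 * ((r + 1) %% 3)) %% 3 != 2.
Proof. by move: r u => [|[|[|r]]] // [|[|[|u]]]. Qed.
Lemma BF3 r : r < 3 -> (r + 2 * ((r + 0) %% 3)) %% 3 = 0.
Proof. by move: r => [|[|[|r]]]. Qed.
Lemma BF4 (s1 s2 x y : 'I_3) : s1 != s2 -> x != s1 -> x != s2 -> y != s1 -> y != s2 -> x = y.
Proof.
move=> a b c d e; apply: val_inj; move: a b c d e; rewrite -!val_eqE.
by case: s1 s2 x y => [[|[|[|?]]] ?] // [[|[|[|?]]] ?] // [[|[|[|?]]] ?] // [[|[|[|?]]] ?].
Qed.
Unset Implicit Arguments.

Lemma eq_from_le_sum (I : finType) (f g : I -> nat) :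
  (forall i, f i <= g i) -> \sum_i f i = \sum_i g i -> forall i, f i = g i.
Proof.
move=> le E i; have H1 : \sum_(j | j != i) f j <= \sum_(j | j != i) g j.
  exact: leq_sum.
rewrite (bigD1 i) // [RHS](bigD1 i) //= in E.
have := le i; lia.
Qed.

Lemma sum_bound m : \sum_(i < 2 * m) (if i < m then 1 else 2) = 3 * m.
Proof.
rewrite -(big_mkord xpredT (fun i => if i < m then 1 else 2)).
rewrite (big_cat_nat _ (n := m)) //=; last lia.
rewrite (eq_big_nat _ _ (F2 := fun _ => 1)); last by move=> i /andP [_ ->].
rewrite [X in _ + X](eq_big_nat _ _ (F2 := fun _ => 2)); last first.
  by move=> i /andP [H _]; rewrite ltnNge H.
rewrite !sum_nat_const_nat; lia.
Qed.

Lemma four_count n (a : 'I_n -> bool) :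
  \sum_(q : 'I_n * 'I_4 | lit_val a (q.1, val q.2 < 2)) 1 = 2 * n.
Proof.
rewrite -(pair_big_dep xpredT (fun j (t : 'I_4) => lit_val a (j, val t < 2)) (fun _ _ => 1)) /=.
rewrite (eq_bigr (fun _ => 2)); last first.
  move=> j _; rewrite /lit_val /=; case: (a j);
  by rewrite big_mkcond /= !big_ord_recr big_ord0 /=.
by rewrite sum_nat_const card_ord mulnC.
Qed.

Lemma div2_4 (t : 'I_4) : 2 <= t -> t %/ 2 = 1.
Proof. by case: t => [[|[|[|[|?]]]] ?]. Qed.

Lemma backward (n m : nat) (cl : 'I_(2 * m) -> 'I_3 -> 'I_n * bool)
  (kappa : 'I_n * 'I_4 -> 'I_(2 * m) * 'I_3)
  (Hbij : bijective kappa)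
  (Hlit : forall (j : 'I_n) (t : 'I_4),
      cl (kappa (j, t)).1 (kappa (j, t)).2 = (j, val t < 2))
  (sigma : Job n m -> Mach n m) :
  valid_schedule (job_elig kappa) sigma -> makespan (@job_size n m) sigma <= 2 ->
  exists a : 'I_n -> bool, sat cl a.
Proof.
move=> Hval Hms.
have Hload x : load (@job_size n m) sigma x <= 2 := leq_trans (@leq_bigmax _ (load (@job_size n m) sigma) x) Hms.
have clash jb1 jb2 x : jb1 != jb2 -> sigma jb1 = x -> sigma jb2 = x ->
    2 < job_size jb1 + job_size jb2 -> False.
  move=> ne E1 E2 lt; have := load_ge2 (@job_size n m) ne E1 E2.
  by move/(leq_trans lt); rewrite ltnNge Hload.
have Hcard := bij_eq_card Hbij; rewrite !card_prod !card_ord in Hcard.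
case: (Hbij) => g kg gk.
pose a := fun j => sigma (inl j) == TMach m j (inord 0).
exists a.
have HA j t : lit_val a (j, val t < 2) ->
    sigma (inr (inr (j, t))) = CMach n (kappa (j, t)).1 (kappa (j, t)).2.
  move=> Hl; have := Hval (inr (inr (j, t))); rewrite /= !inE => /orP [/eqP E|/eqP //].
  exfalso.
  have ET : sigma (inl j) = TMach m j (inord (t %/ 2)).
    have := Hval (inl j); rewrite /= !inE; move: Hl; rewrite /lit_val /= /a.
    case: (ltnP t 2) => Ht.
      by rewrite (divn_small Ht) => /eqP.
    by rewrite (@div2_4 t Ht) => /negPf -> /= /eqP.
  by apply: (clash _ _ _ _ ET E).
have HA' i s : lit_val a (cl i s) -> sigma (inr (inr (g (i, s)))) = CMach n i s.
  have := Hlit (g (i, s)).1 (g (i, s)).2; rewrite -surjective_pairing gk /= => ->.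
  by move/HA; rewrite -surjective_pairing gk.
have CJ i s : exists s', sigma (inr (inl (i, s))) = CMach n i s'.
  by have := Hval (inr (inl (i, s))); rewrite /= => /imsetP [s' _ ->]; exists s'.
have sz1 i : job_size (inr (inl (i, inord 1)) : Job n m) = (if i < m then 2 else 1).
  by rewrite /= inordK.
have sz2 i : job_size (inr (inl (i, inord 2)) : Job n m) = 2.
  by rewrite /= inordK.
have HB i : #|[set s | lit_val a (cl i s)]| <= (if i < m then 1 else 2).
  case: ifP => Him.
    rewrite leqNgt; apply/negP => /card_gt1P [s1 [s2 [H1 H2 H12]]].
    rewrite !inE in H1 H2.
    have [x Ex] := CJ i (inord 1); have [y Ey] := CJ i (inord 2).
    have nxs s : lit_val a (cl i s) -> x != s.
      move=> Hs; apply/eqP => E; subst x.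
      by apply: (clash _ _ _ _ Ex (HA' i s Hs)) => //; rewrite sz1 Him.
    have nys s : lit_val a (cl i s) -> y != s.
      move=> Hs; apply/eqP => E; subst y.
      by apply: (clash _ _ _ _ Ey (HA' i s Hs)) => //; rewrite sz2.
    have Exy := BF4 H12 (nxs _ H1) (nxs _ H2) (nys _ H1) (nys _ H2).
    subst y; apply: (clash _ _ _ _ Ex Ey); last by rewrite sz1 sz2 Him.
    by apply/eqP => -[] /(congr1 val); rewrite /= !inordK.
  rewrite leqNgt; apply/negP => Hc.
  have Hall s : lit_val a (cl i s).
    have := cardsC [set s | lit_val a (cl i s)]; rewrite card_ord => E.
    have /cards0_eq E0 : #|~: [set s | lit_val a (cl i s)]| = 0 by lia.
    apply/negPn/negP => Hn.
    have : s \in ~: [set s | lit_val a (cl i s)] by rewrite !inE.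
    by rewrite E0 inE.
  have [x Ex] := CJ i (inord 2).
  by apply: (clash _ _ _ _ Ex (HA' i x (Hall x))) => //; rewrite sz2.
have Hsum : \sum_i #|[set s | lit_val a (cl i s)]| = 2 * n.
  transitivity (\sum_(p : 'I_(2 * m) * 'I_3 | lit_val a (cl p.1 p.2)) 1).
    rewrite -(pair_big_dep xpredT (fun i s => lit_val a (cl i s)) (fun _ _ => 1)) /=.
    by apply: eq_bigr => i _; rewrite -sum1_card; apply: eq_bigl => s; rewrite inE.
  rewrite (reindex kappa) /=; last exact: onW_bij.
  rewrite -(@four_count n a); apply: eq_bigl => -[j t] /=.
  by rewrite Hlit.
move=> i; apply: (@eq_from_le_sum _ (fun i => #|[set s | lit_val a (cl i s)]|)
   (fun i : 'I_(2 * m) => if i < m then 1 else 2) HB).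
by rewrite Hsum sum_bound; lia.
Qed.

Lemma forward (n m : nat) (cl : 'I_(2 * m) -> 'I_3 -> 'I_n * bool)
  (kappa : 'I_n * 'I_4 -> 'I_(2 * m) * 'I_3)
  (Hbij : bijective kappa)
  (Hlit : forall (j : 'I_n) (t : 'I_4),
      cl (kappa (j, t)).1 (kappa (j, t)).2 = (j, val t < 2))
  (a : 'I_n -> bool) : sat cl a ->
  (exists sigma : Job n m -> Mach n m,
      valid_schedule (job_elig kappa) sigma /\ makespan (@job_size n m) sigma <= 2).
Proof.
move=> Hsat.
case: (Hbij) => g kg gk.
pose P (i : 'I_(2 * m)) (s : 'I_3) := (i < m) == lit_val a (cl i s).
pose r (i : 'I_(2 * m)) : 'I_3 := odflt ord0 [pick s | P i s].
have Hr i s : P i s = (s == r i).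
  have H1 : #|[set s | P i s]| == 1.
    have := Hsat i; case: ifP => Him E.
      suff -> : [set s | P i s] = [set s | lit_val a (cl i s)] by rewrite E.
      by apply/setP => s'; rewrite !inE /P Him.
    suff -> : [set s | P i s] = ~: [set s | lit_val a (cl i s)].
      by have := cardsC [set s | lit_val a (cl i s)]; rewrite card_ord E => ?; apply/eqP; lia.
    by apply/setP => s'; rewrite !inE /P Him; case: (lit_val _ _).
  case/cards1P: H1 => x Ex.
  have Px s' : P i s' = (s' == x) by move/setP/(_ s'): Ex; rewrite !inE.
  rewrite /r; case: pickP => [y Py | none].
    by rewrite Px in Py; rewrite (eqP Py) /= Px.
  by have := none x; rewrite Px eqxx.
pose k (i : 'I_(2 * m)) : 'I_3 := Ordinal (ltn_pmod (r i + (m <= i)) (isT : 0 < 3)).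
pose pos (i : 'I_(2 * m)) (s : 'I_3) : 'I_3 := Ordinal (ltn_pmod (s + k i) (isT : 0 < 3)).
pose h (i : 'I_(2 * m)) (u : 'I_3) : 'I_3 := Ordinal (ltn_pmod (u + 2 * k i) (isT : 0 < 3)).
have posh i s u : (pos i s == u) = (s == h i u).
  by rewrite -!val_eqE /= BF1 ?ltn_pmod ?ltn_ord.
pose q (j : 'I_n) : 'I_2 := if a j then inord 0 else inord 1.
pose sigma (jb : Job n m) : Mach n m := match jb with
 | inl j => TMach m j (q j)
 | inr (inl (i, s)) => CMach n i (pos i s)
 | inr (inr (j, t)) => if (val t < 2) == a j
     then CMach n (kappa (j,t)).1 (kappa (j,t)).2 else TMach m j (inord (val t %/ 2))
 end.
exists sigma; split.
  case => [j | [[i s] | [j t]]] /=; rewrite ?inE.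
  - by rewrite /q; case: (a j); rewrite eqxx ?orbT.
  - by apply/imsetP; exists (pos i s).
  - by case: ifP => _; rewrite eqxx ?orbT.
apply/bigmax_leqP => -[[j qq] | [i u]] _.
  case E: (qq == q j).
    apply: leq_trans (load_le1 _ (a := inl j) _) _ => //.
    move=> [j' | [[i s] | [j' t]]] /=; rewrite /TMach /CMach //.
      by move/eqP => -[->].
    case: ifP => // Hc /eqP [Ej Et]; subst j'; exfalso.
    move: E Hc; rewrite -Et /q; case: (a j); case: (ltnP t 2) => Ht;
      rewrite ?(divn_small Ht) ?(@div2_4 t Ht) //= -val_eqE /= !inordK //.
  apply: leq_trans (load_le2 _ (a := inr (inr (j, inord (2 * qq)))) (b := inr (inr (j, inord (2 * qq + 1)))) _) _ => //.
  move=> [j' | [[i s] | [j' t]]] /=; rewrite /TMach /CMach //.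
    by move/eqP => -[Ej Eq]; subst; rewrite eqxx in E.
  case: ifP => // Hc /eqP [Ej Et]; subst j'.
  have : t %/ 2 = qq :> nat by rewrite -Et inordK // ltn_divLR.
  case: t {Et E Hc} => [[|[|[|[|?]]]] ?] //; case: qq => [[|[|?]] ?] //= _;
    (left + right); congr (inr (inr (_, _))); apply: val_inj; by rewrite /= inordK.
case L: (lit_val a (cl i u)).
  apply: leq_trans (load_le2 _ (a := inr (inl (i, h i u))) (b := inr (inr (g (i, u)))) _) _.
    move=> [j' | [[i' s] | [j t]]] /=; rewrite /TMach /CMach //.
      move/eqP => -[Ei Es]; subst i'; left; congr (inr (inl (_, _))).
      by apply/eqP; rewrite -posh Es.
    case: ifP => // Hc /eqP [E1 E2]; right; congr (inr (inr _)).
    by rewrite -[(j, t)]kg; congr g; rewrite [kappa (j, t)]surjective_pairing E1 E2.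
  rewrite /= addn1 ltnS.
  have Hru := Hr i u; rewrite /P L in Hru.
  case: (ltnP i m) => Him.
    rewrite Him eqxx in Hru.
    have Hm : (m <= i) = false by rewrite leqNgt Him.
    by rewrite /= -(eqP (esym Hru)) BF3.
  rewrite ltnNge Him /= in Hru.
  have := @BF2 (r i) u (ltn_ord _) (ltn_ord _) (negbT (esym Hru)).
  rewrite /=.
  by case: (_ %% 3) (ltn_pmod (u + 2 * ((r i + 1) %% 3)) (isT : 0 < 3)) => [|[|[|?]]].
apply: leq_trans (load_le1 _ (a := inr (inl (i, h i u))) _) _; last first.
  by rewrite /=; case: ifP => //; case: ifP => //; case: ifP.
move=> [j' | [[i' s] | [j t]]] /=; rewrite /TMach /CMach //.
  move/eqP => -[Ei Es]; subst i'; congr (inr (inl (_, _))).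
  by apply/eqP; rewrite -posh Es.
case: ifP => // Hc /eqP [E1 E2]; exfalso.
move: L; rewrite -E1 -E2 Hlit /lit_val /=; move/eqP: Hc; case: (val t < 2) => <- //.
Qed.

Theorem lemma8 (n m : nat) (cl : 'I_(2 * m) -> 'I_3 -> 'I_n * bool)
  (Hocc : forall l : 'I_n * bool,
      #|[set p : 'I_(2 * m) * 'I_3 | cl p.1 p.2 == l]| = 2)
  (kappa : 'I_n * 'I_4 -> 'I_(2 * m) * 'I_3)
  (Hbij : bijective kappa)
  (Hlit : forall (j : 'I_n) (t : 'I_4),
      cl (kappa (j, t)).1 (kappa (j, t)).2 = (j, val t < 2))
  (Hord : forall j : 'I_n,
      pos_lt (kappa (j, inord 0)) (kappa (j, inord 1)) /\
      pos_lt (kappa (j, inord 2)) (kappa (j, inord 3))) :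
  (exists a : 'I_n -> bool, sat cl a) <->
  (exists sigma : Job n m -> Mach n m,
      valid_schedule (job_elig kappa) sigma /\ makespan (@job_size n m) sigma <= 2).
Proof.
split.
  by case=> a Ha; exact: (@forward n m cl kappa Hbij Hlit a Ha).
by case=> sigma [Hv Hm]; exact: (@backward n m cl kappa Hbij Hlit sigma Hv Hm).
Qed.
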